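(* In the Cucker–Smale setting below, for all $i,j=1,\dots,N$, every unit vector $v\in\mathbb{R}^d$ and every $n\in\mathbb{N}_0$, $$\langle v_i(t)-v_j(t),v\rangle\le e^{-\tilde K(t-\bar t)}\langle v_i(\bar t)-v_j(\bar t),v\rangle+\big(1-e^{-\tilde K(t-\bar t)}\big)d_V(t_{2n})$$ for all $t_{2n+1}>t\ge\bar t\ge t_{2n}$.
   Context: Setting: $N\ge2$; $\tilde\psi:\mathbb{R}\to\mathbb{R}$ positive, bounded, continuous, with $\tilde K:=\|\tilde\psi\|_\infty$ and $\int_0^\infty\min_{r\in[0,x]}\tilde\psi(r)dx=+\infty$; $\{t_n\}_{n\in\mathbb{N}_0}$ increasing, nonnegative, $t_0=0$, $t_n\to\infty$, with $t_{2n+2}-t_{2n+1}<\frac{\ln2}{\tilde K}$ and $t_{2n+1}-t_{2n}>\frac1{\tilde K}$ for all $n$, and $\sum_{p\ge0}\ln\frac{e^{\tilde K(t_{2p+2}-t_{2p+1})}}{2-e^{\tilde K(t_{2p+2}-t_{2p+1})}}<\infty$. $\alpha(0)=1$, $\alpha=1$ on $(t_{2n},t_{2n+1})$, $\alpha=-1$ on $[t_{2n+1},t_{2n+2}]$. $\{(x_i,v_i)\}$ solves $x_i'=v_i$, $v_i'(t)=\frac1{N-1}\sum_{j\ne i}\alpha(t)\tilde\psi(|x_i(t)-x_j(t)|)(v_j(t)-v_i(t))$, $t>0$, with given initial data in $\mathbb{R}^d$ (continuous, $C^1$ on each $(t_n,t_{n+1})$). $d_V(t):=\max_{i,j}|v_i(t)-v_j(t)|$.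 *)

(* Defs.v *)
From Stdlib Require Import Reals Lra.
From Coquelicot Require Import Coquelicot.
Open Scope R_scope.

Fixpoint sumR (n : nat) (f : nat -> R) : R :=
  match n with O => 0 | S m => sumR m f + f m end.

(* maxR n f = max (0, f 0, ..., f (n-1)); used only for nonnegative f *)
Fixpoint maxR (n : nat) (f : nat -> R) : R :=
  match n with O => 0 | S m => Rmax (maxR m f) (f m) end.

(* Vectors of R^d are represented as u : nat -> R (components k < d). *)
Definition dot (d : nat) (u w : nat -> R) : R := sumR d (fun k => u k * w k).
Definition enorm (d : nat) (u : nat -> R) : R := sqrt (dot d u u).

Definition sup_norm (psi : R -> R) : R :=
  real (Lub_Rbar (fun y => exists r, y = Rabs (psi r))).

Definition min_on (psi : R -> R) (x : R) : R :=
  real (Glb_Rbar (fun y => exists r, 0 <= r <= x /\ y = psi r)).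

(* d_V(t) = max_{i,j} |v_i(t) - v_j(t)|, v : agent -> component -> time -> R *)
Definition dV (N d : nat) (v : nat -> nat -> R -> R) (s : R) : R :=
  maxR N (fun i => maxR N (fun j => enorm d (fun k => v i k s - v j k s))).

(* Main.v *)
Require Import Defs.
From Stdlib Require Import Reals Lra Lia Classical.
From Coquelicot Require Import Coquelicot.
Open Scope R_scope.

Lemma sumR_ext n f g : (forall i, (i < n)%nat -> f i = g i) -> sumR n f = sumR n g.
Proof. induction n; simpl; intros H; auto. rewrite IHn; [rewrite H|]; auto. Qed.

Lemma sumR_plus n f g : sumR n (fun i => f i + g i) = sumR n f + sumR n g.
Proof. induction n; simpl; [ring|rewrite IHn; ring]. Qed.

Lemma sumR_scal n c f : sumR n (fun i => c * f i) = c * sumR n f.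
Proof. induction n; simpl; [ring|rewrite IHn; ring]. Qed.

Lemma sumR_minus n f g : sumR n (fun i => f i - g i) = sumR n f - sumR n g.
Proof. induction n; simpl; [ring|rewrite IHn; ring]. Qed.

Lemma sumR_zero n : sumR n (fun _ => 0) = 0.
Proof. induction n; simpl; [ring|rewrite IHn; ring]. Qed.

Lemma sumR_swap n m (f : nat -> nat -> R) :
  sumR n (fun i => sumR m (fun j => f i j)) = sumR m (fun j => sumR n (fun i => f i j)).
Proof. induction n; simpl. rewrite sumR_zero; ring.
  rewrite IHn, <- sumR_plus. reflexivity. Qed.

Lemma sumR_le n f g : (forall i, (i < n)%nat -> f i <= g i) -> sumR n f <= sumR n g.
Proof. induction n; simpl; intros H; [lra|]. apply Rplus_le_compat; auto. Qed.


Lemma sumR_skip_far n k C : (n <= k)%nat ->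
  sumR n (fun j => if Nat.eq_dec j k then 0 else C) = INR n * C.
Proof. induction n; cbn [sumR]; intros H; [simpl; ring|]. rewrite IHn by lia.
  destruct (Nat.eq_dec n k); [lia|]. rewrite S_INR; ring. Qed.

Lemma sumR_skip n k C : (k < n)%nat ->
  sumR n (fun j => if Nat.eq_dec j k then 0 else C) = (INR n - 1) * C.
Proof. induction n; cbn [sumR]; intros H; [lia|].
  destruct (Nat.eq_dec n k).
  - subst. rewrite sumR_skip_far by lia. rewrite S_INR; ring.
  - rewrite IHn by lia. rewrite S_INR; ring. Qed.

Lemma maxR_ge n f k : (k < n)%nat -> f k <= maxR n f.
Proof. induction n; simpl; intros H; [lia|].
  destruct (Nat.eq_dec k n). subst; apply Rmax_r.
  eapply Rle_trans; [apply IHn; lia| apply Rmax_l]. Qed.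

Lemma sumR_sq_ge0 n f : 0 <= sumR n (fun i => f i * f i).
Proof. induction n; simpl; [lra|]. pose proof (Rle_0_sqr (f n)). unfold Rsqr in *; lra. Qed.

Lemma dot_le_enorm d w e : enorm d e = 1 -> dot d w e <= enorm d w.
Proof.
  intros He. unfold enorm, dot in *.
  assert (Hee : sumR d (fun k => e k * e k) = 1).
  { pose proof (sumR_sq_ge0 d e). rewrite <- (sqrt_sqrt (sumR d _)) by auto.
    rewrite He; ring. }
  set (l := sumR d (fun k => w k * e k)).
  pose proof (sumR_sq_ge0 d (fun k => w k - l * e k)) as H.
  rewrite (sumR_ext d _ (fun k => w k * w k + ((-2*l) * (w k * e k) + (l*l) * (e k * e k))))
    in H by (intros; ring).
  rewrite sumR_plus, sumR_plus, !sumR_scal, Hee in H. fold l in H.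
  assert (l * l <= sumR d (fun k => w k * w k)) by nra.
  apply Rle_trans with (Rabs l). apply Rle_abs.
  rewrite <- sqrt_Rsqr_abs. apply sqrt_le_1_alt. unfold Rsqr; lra.
Qed.

Fixpoint mx (f : nat -> R) (m : nat) : R :=
  match m with O => f O | S p => Rmax (mx f p) (f (S p)) end.

Lemma mx_ge f m k : (k <= m)%nat -> f k <= mx f m.
Proof. induction m; simpl; intros H. replace k with O by lia; lra.
  destruct (Nat.eq_dec k (S m)). subst; apply Rmax_r.
  eapply Rle_trans; [apply IHm; lia| apply Rmax_l]. Qed.

Lemma mx_attained f m : exists k, (k <= m)%nat /\ mx f m = f k.
Proof. induction m; simpl. exists O; auto.
  destruct IHm as [k [Hk E]]. unfold Rmax; destruct Rle_dec.
  exists (S m); auto. exists k; split; auto. Qed.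

Lemma ev_lt {T} (F : (T -> Prop) -> Prop) {FF : Filter F} (f : T -> R) (l c : R) :
  filterlim f F (locally l) -> l < c -> F (fun x => f x < c).
Proof.
  intros H Hl. apply filterlim_locally with (eps := mkposreal (c - l) ltac:(lra)) in H.
  eapply filter_imp; [|exact H]. intros x Hx. simpl in Hx.
  change (Rabs (f x - l) < c - l) in Hx. apply Rabs_def2 in Hx. lra.
Qed.

Lemma ev_gt {T} (F : (T -> Prop) -> Prop) {FF : Filter F} (f : T -> R) (l c : R) :
  filterlim f F (locally l) -> c < l -> F (fun x => c < f x).
Proof.
  intros H Hl. apply filterlim_locally with (eps := mkposreal (l - c) ltac:(lra)) in H.
  eapply filter_imp; [|exact H]. intros x Hx. simpl in Hx.
  change (Rabs (f x - l) < l - c) in Hx. apply Rabs_def2 in Hx. lra.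
Qed.

Lemma ev_all {T} (F : (T -> Prop) -> Prop) {FF : Filter F} N (P : nat -> T -> Prop) :
  (forall k, (k < N)%nat -> F (P k)) -> F (fun x => forall k, (k < N)%nat -> P k x).
Proof.
  induction N; intros H.
  - apply filter_forall. intros; lia.
  - eapply filter_imp; [| apply filter_and; [apply IHN; intros; apply H; lia | apply (H N); lia]].
    intros x [H1 H2] k Hk. destruct (Nat.eq_dec k N). subst; auto. apply H1; lia.
Qed.

Lemma lim_plus {T} (F : (T -> Prop) -> Prop) {FF : Filter F} (f g : T -> R) (a b : R) :
  filterlim f F (locally a) -> filterlim g F (locally b) ->
  filterlim (fun x => f x + g x) F (locally (a + b)).
Proof. intros. eapply filterlim_comp_2; eauto. apply (@filterlim_plus R_AbsRing R_NormedModule). Qed.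

Lemma lim_mult {T} (F : (T -> Prop) -> Prop) {FF : Filter F} (f g : T -> R) (a b : R) :
  filterlim f F (locally a) -> filterlim g F (locally b) ->
  filterlim (fun x => f x * g x) F (locally (a * b)).
Proof. intros. eapply filterlim_comp_2; eauto. apply (@filterlim_mult R_AbsRing). Qed.

Lemma lim_sumR {T} (F : (T -> Prop) -> Prop) {FF : Filter F} n (f : nat -> T -> R) a :
  (forall i, (i < n)%nat -> filterlim (f i) F (locally (a i))) ->
  filterlim (fun x => sumR n (fun i => f i x)) F (locally (sumR n a)).
Proof. induction n; simpl; intros H. apply filterlim_const.
  apply lim_plus; auto. Qed.

Lemma cont_right (f : R -> R) (x : R) : continuous f x -> filterlim f (at_right x) (locally (f x)).
Proof. intros H P HP. specialize (H P HP). unfold filtermap in *.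
  destruct H as [d Hd]. exists d. intros; apply Hd; auto. Qed.

Lemma derive_sumR n (f df : nat -> R -> R) s :
  (forall i, (i < n)%nat -> is_derive (f i) s (df i s)) ->
  is_derive (fun x => sumR n (fun i => f i x)) s (sumR n (fun i => df i s)).
Proof. induction n; simpl; intros H. apply (is_derive_const (V:=R_NormedModule)).
  apply (is_derive_plus (K:=R_AbsRing) (V:=R_NormedModule)); auto. Qed.

Lemma first_hit (P : R -> Prop) a t1 : a <= t1 -> P t1 ->
  exists tau, a <= tau <= t1 /\ (forall s, a <= s < tau -> ~ P s) /\
    (forall del, 0 < del -> exists s, tau <= s < tau + del /\ a <= s <= t1 /\ P s).
Proof.
  intros Hat HP.
  set (E := fun y => a <= - y <= t1 /\ P (- y)).
  assert (Hb : bound E). { exists (- a). intros y [[H1 H2] _]. lra. }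
  assert (Hne : exists y, E y). { exists (- t1). unfold E; rewrite Ropp_involutive; split; [lra|auto]. }
  destruct (completeness E Hb Hne) as [m [Hub Hlub]].
  exists (- m). split; [split|split].
  - apply Ropp_le_cancel. rewrite Ropp_involutive. apply Hlub. intros y [[H1 H2] _]. lra.
  - assert (- t1 <= m). { apply Hub. unfold E; rewrite Ropp_involutive; split; [lra|auto]. } lra.
  - intros s Hs Ps. assert (- s <= m).
    { apply Hub. unfold E; rewrite Ropp_involutive; split; [|auto].
      assert (- t1 <= m). { apply Hub. unfold E; rewrite Ropp_involutive; split; [lra|auto]. } lra. }
    lra.
  - intros del Hdel. apply NNPP; intro Hn.
    assert (Hub2 : is_upper_bound E (m - del)).
    { intros y Hy. apply Rnot_lt_le; intro Hlt. apply Hn. exists (- y).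
      pose proof (Hub y Hy). destruct Hy as [H1 H2]. split; [lra|split; auto]. }
    specialize (Hlub _ Hub2). lra.
Qed.

Lemma deriv_neg_left (g : R -> R) tau l a :
  is_derive g tau l -> l < 0 -> a < tau -> exists s, a <= s < tau /\ g tau < g s.
Proof.
  intros Hd Hl Ha. apply is_derive_Reals in Hd.
  destruct (Hd (- l / 2) ltac:(lra)) as [del Hdel].
  pose proof (cond_pos del) as Hdp.
  set (h := - (Rmin del (tau - a)) / 2).
  assert (Hm1 : Rmin del (tau - a) <= del) by apply Rmin_l.
  assert (Hm2 : Rmin del (tau - a) <= tau - a) by apply Rmin_r.
  assert (Hm3 : 0 < Rmin del (tau - a)) by (apply Rmin_pos; lra).
  assert (Hh : h < 0) by (unfold h; lra).
  specialize (Hdel h ltac:(lra)).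
  assert (Habs : Rabs h < del) by (rewrite Rabs_left by lra; unfold h; lra).
  specialize (Hdel Habs). apply Rabs_def2 in Hdel. destruct Hdel as [Hq _].
  exists (tau + h). split. unfold h; lra.
  set (q := (g (tau + h) - g tau) / h) in *.
  assert (E : g (tau + h) - g tau = q * h) by (unfold q; field; lra).
  assert (q < 0) by lra. nra.
Qed.

Lemma lim_affine (p q x : R) : filterlim (fun s => p + q * s) (locally x) (locally (p + q * x)).
Proof. apply (lim_plus (locally x)). apply filterlim_const. apply (lim_mult (locally x)). apply filterlim_const. apply filterlim_id. Qed.

Lemma maxprin N (u D : nat -> R -> R) a b M :
  (forall k s, (k < N)%nat -> a < s < b -> is_derive (u k) s (D k s)) ->
  (forall k, (k < N)%nat -> filterlim (u k) (at_right a) (locally (u k a))) ->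
  (forall k s, (k < N)%nat -> a < s < b ->
     (forall j, (j < N)%nat -> u j s <= u k s) -> D k s <= 0) ->
  (forall k, (k < N)%nat -> u k a <= M) ->
  forall k t, (k < N)%nat -> a <= t < b -> u k t <= M.
Proof.
  intros Hd Hc HD H0 k1 t1 Hk1 Ht1.
  apply Rnot_lt_le; intro Hgt.
  set (eps := (u k1 t1 - M) / (2 * (1 + t1 - a))).
  assert (Heps : 0 < eps) by (unfold eps; apply Rdiv_lt_0_compat; lra).
  set (G := fun k s => u k s - (M + eps * (1 + s - a))).
  assert (HG1 : G k1 t1 > 0).
  { unfold G. replace (eps * (1 + t1 - a)) with ((u k1 t1 - M) / 2) by (unfold eps; field; lra). lra. }
  destruct (first_hit (fun s => exists k, (k < N)%nat /\ 0 <= G k s) a t1)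
    as [tau [Htau [Hbefore Hafter]]]; [lra| exists k1; split; auto; lra|].
  assert (Ha : a < tau).
  { destruct (Rle_lt_or_eq_dec a tau (proj1 Htau)) as [|E]; [lra| exfalso; subst tau].
    assert (Hev : at_right a (fun s => forall k, (k < N)%nat -> u k s < M + eps)).
    { apply (ev_all (at_right a)). intros k Hk. apply (ev_lt (at_right a) (u k) (u k a)). auto. specialize (H0 k Hk). lra. }
    destruct Hev as [del Hdel].
    destruct (Hafter del (cond_pos del)) as [s [[Hs1 Hs2] [Hs3 [k [Hk HG]]]]].
    unfold G in HG.
    destruct (Rle_lt_or_eq_dec a s (proj1 Hs3)) as [Has|Eas].
    - assert (Hb : ball a del s).
      { change (Rabs (s - a) < del). rewrite Rabs_right by lra. lra. }
      specialize (Hdel s Hb Has k Hk). nra.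
    - subst s. specialize (H0 k Hk). nra. }
  assert (Hcont : forall k, (k < N)%nat -> filterlim (G k) (locally tau) (locally (G k tau))).
  { intros k Hk. unfold G.
    apply (filterlim_ext (fun s => u k s + ((- (M + eps * (1 - a))) + (- eps) * s))).
    intros; ring.
    replace (u k tau - (M + eps * (1 + tau - a))) with
      (u k tau + ((- (M + eps * (1 - a))) + (- eps) * tau)) by ring.
    apply (lim_plus (locally tau)); [|apply lim_affine].
    apply (ex_derive_continuous (K:=R_AbsRing) (V:=R_NormedModule) (u k)). eexists. apply Hd; auto; lra. }
  assert (HPk : exists k, (k < N)%nat /\ 0 <= G k tau).
  { apply NNPP; intro Hn.
    assert (Hall : forall k, (k < N)%nat -> G k tau < 0).
    { intros k Hk. apply Rnot_le_lt; intro; apply Hn; eauto. }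
    assert (Hev : locally tau (fun s => forall k, (k < N)%nat -> G k s < 0)).
    { apply (ev_all (locally tau)). intros k Hk. apply (ev_lt (locally tau) (G k) (G k tau)); auto. }
    destruct Hev as [del Hdel].
    destruct (Hafter del (cond_pos del)) as [s [[Hs1 Hs2] [Hs3 [k [Hk HG]]]]].
    assert (Hb : ball tau del s).
    { change (Rabs (s - tau) < del). rewrite Rabs_right by lra. lra. }
    specialize (Hdel s Hb k Hk). lra. }
  destruct HPk as [k [Hk HGk]].
  assert (Hle : forall j, (j < N)%nat -> G j tau <= 0).
  { intros j Hj. apply Rnot_lt_le; intro Hpos.
    assert (Hev := ev_gt (locally tau) (G j) (G j tau) 0 (Hcont j Hj) Hpos).
    destruct Hev as [del Hdel].
    pose proof (cond_pos del) as Hdp.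
    assert (Hm1 : Rmin del (tau - a) <= del) by apply Rmin_l.
    assert (Hm2 : Rmin del (tau - a) <= tau - a) by apply Rmin_r.
    assert (Hm3 : 0 < Rmin del (tau - a)) by (apply Rmin_pos; lra).
    set (s := tau - Rmin del (tau - a) / 2).
    assert (Hb : ball tau del s).
    { change (Rabs (s - tau) < del). unfold s. rewrite Rabs_left by lra. lra. }
    specialize (Hdel s Hb). apply (Hbefore s). unfold s; lra.
    exists j; split; auto; lra. }
  assert (HDk : D k tau <= 0).
  { apply HD; auto. lra. intros j Hj. specialize (Hle j Hj). unfold G in *. lra. }
  assert (HdG : is_derive (G k) tau (D k tau - eps)).
  { unfold G. apply (is_derive_minus (K:=R_AbsRing) (V:=R_NormedModule)).
    apply Hd; auto; lra. auto_derive; auto. ring. }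
  destruct (deriv_neg_left (G k) tau (D k tau - eps) a HdG ltac:(lra) Ha) as [s [Hs Hgs]].
  apply (Hbefore s Hs). exists k; split; auto; lra.
Qed.

Definition Du N (u : nat -> R -> R) (c : nat -> nat -> R -> R) k s :=
  / (INR N - 1) * sumR N (fun j => c k j s * (u j s - u k s)).

Lemma is_derive_eq (f : R -> R) x l l' : is_derive f x l -> l = l' -> is_derive f x l'.
Proof. intros H E; subst; auto. Qed.

Lemma lim_opp {T} (F : (T -> Prop) -> Prop) {FF : Filter F} (f : T -> R) (a : R) :
  filterlim f F (locally a) -> filterlim (fun x => - f x) F (locally (- a)).
Proof. intros H. apply (filterlim_ext (fun x => (-1) * f x)). intros; ring.
  replace (- a) with ((-1) * a) by ring. apply (lim_mult F); auto. apply filterlim_const. Qed.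

Lemma core N K (u : nat -> R -> R) (c : nat -> nat -> R -> R) a b Dv :
  (2 <= N)%nat -> 0 <= K ->
  (forall k s, (k < N)%nat -> a < s < b -> is_derive (u k) s (Du N u c k s)) ->
  (forall k j s, 0 <= c k j s <= K) ->
  (forall k s, c k k s = 0) ->
  (forall k tb, (k < N)%nat -> a <= tb < b -> filterlim (u k) (at_right tb) (locally (u k tb))) ->
  (forall p q, (p < N)%nat -> (q < N)%nat -> u p a - u q a <= Dv) ->
  forall i j tb s, (i < N)%nat -> (j < N)%nat -> a <= tb -> tb <= s -> s < b ->
    u i s - u j s <= exp (- K * (s - tb)) * (u i tb - u j tb) + (1 - exp (- K * (s - tb))) * Dv.
Proof.
  intros HN HK Hd Hc Hcc Hr HDv i j tb s Hi Hj Htb1 Htb2 Hsb.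
  assert (HN1 : 1 < INR N). { apply (le_INR 2) in HN. simpl in HN. lra. }
  assert (Hup : forall k s M, (k < N)%nat ->
            (forall j, (j < N)%nat -> u j s <= M) -> u k s <= M -> Du N u c k s <= K * (M - u k s)).
  { intros k s0 M Hk Hall Hks. unfold Du.
    assert (sumR N (fun j => c k j s0 * (u j s0 - u k s0)) <=
            sumR N (fun j => if Nat.eq_dec j k then 0 else K * (M - u k s0))).
    { apply sumR_le. intros j0 Hj0. destruct (Nat.eq_dec j0 k).
      - subst. rewrite Hcc. lra.
      - specialize (Hc k j0 s0). specialize (Hall j0 Hj0). nra. }
    rewrite sumR_skip in H by auto.
    apply Rle_trans with (/ (INR N - 1) * ((INR N - 1) * (K * (M - u k s0)))).
    apply Rmult_le_compat_l; auto. left; apply Rinv_0_lt_compat; lra.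
    right; field; lra. }
  assert (Hlow : forall k s m, (k < N)%nat ->
            (forall j, (j < N)%nat -> m <= u j s) -> m <= u k s -> K * (m - u k s) <= Du N u c k s).
  { intros k s0 m Hk Hall Hks. unfold Du.
    assert (sumR N (fun j => if Nat.eq_dec j k then 0 else K * (m - u k s0)) <=
            sumR N (fun j => c k j s0 * (u j s0 - u k s0))).
    { apply sumR_le. intros j0 Hj0. destruct (Nat.eq_dec j0 k).
      - subst. rewrite Hcc. lra.
      - specialize (Hc k j0 s0). specialize (Hall j0 Hj0). nra. }
    rewrite sumR_skip in H by auto.
    apply Rle_trans with (/ (INR N - 1) * ((INR N - 1) * (K * (m - u k s0)))).
    right; field; lra.
    apply Rmult_le_compat_l; auto. left; apply Rinv_0_lt_compat; lra. }
  set (M0 := mx (fun k => u k a) (N - 1)).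
  set (m0 := - mx (fun k => - u k a) (N - 1)).
  assert (HM0 : forall k, (k < N)%nat -> u k a <= M0).
  { intros k Hk. apply (mx_ge (fun k => u k a)). lia. }
  assert (Hm0 : forall k, (k < N)%nat -> m0 <= u k a).
  { intros k Hk. unfold m0. pose proof (mx_ge (fun k => - u k a) (N - 1) k ltac:(lia)). simpl in H. lra. }
  assert (HMm : M0 - m0 <= Dv).
  { destruct (mx_attained (fun k => u k a) (N - 1)) as [p [Hp Ep]].
    destruct (mx_attained (fun k => - u k a) (N - 1)) as [q [Hq Eq]].
    unfold m0, M0. rewrite Ep, Eq. specialize (HDv p q ltac:(lia) ltac:(lia)). lra. }
  assert (Hab : a < b) by lra.
  assert (IU : forall k t, (k < N)%nat -> a <= t < b -> u k t <= M0).
  { apply (maxprin N u (Du N u c) a b M0); auto.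
    - intros k Hk. apply Hr; auto; lra.
    - intros k s0 Hk Hs0 Hall. specialize (Hup k s0 (u k s0) Hk Hall (Rle_refl _)). nra. }
  assert (IL : forall k t, (k < N)%nat -> a <= t < b -> m0 <= u k t).
  { intros k t Hk Ht.
    assert (forall k t, (k < N)%nat -> a <= t < b -> - u k t <= - m0).
    { apply (maxprin N (fun k s => - u k s) (fun k s => - Du N u c k s) a b (- m0)).
      - intros k0 s0 Hk0 Hs0. apply (is_derive_opp (K:=R_AbsRing) (V:=R_NormedModule)). auto.
      - intros k0 Hk0. apply (lim_opp (at_right a)). apply Hr; auto; lra.
      - intros k0 s0 Hk0 Hs0 Hall.
        assert (Hall' : forall j, (j < N)%nat -> u k0 s0 <= u j s0) by (intros j0 Hj0; specialize (Hall j0 Hj0); lra).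
        specialize (Hlow k0 s0 (u k0 s0) Hk0 Hall' (Rle_refl _)). nra.
      - intros k0 Hk0. specialize (Hm0 k0 Hk0). lra. }
    specialize (H k t Hk Ht). lra. }
  set (f := fun t => exp (K * (t - tb)) * ((u i t - u j t) - Dv)).
  assert (Hf : forall t, tb <= t < b -> f t <= f tb).
  { intros t Ht.
    refine (maxprin 1 (fun _ => f)
      (fun _ t => exp (K * (t - tb)) * (K * ((u i t - u j t) - Dv) + (Du N u c i t - Du N u c j t)))
      tb b (f tb) _ _ _ _ O t _ Ht).
    - intros _ s0 _ Hs0. unfold f.
      eapply is_derive_eq.
      + apply (is_derive_mult (K:=R_AbsRing)).
        * auto_derive; auto.
        * apply (is_derive_minus (K:=R_AbsRing) (V:=R_NormedModule)).
          apply (is_derive_minus (K:=R_AbsRing) (V:=R_NormedModule)); apply Hd; auto; lra.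
          apply (is_derive_const (K:=R_AbsRing) (V:=R_NormedModule)).
        * intros; apply Rmult_comm.
      + unfold plus, mult, minus, opp, zero; simpl. change (plus (plus ?x ?y) ?z) with ((x + y) + z). replace (s0 + - tb) with (s0 - tb) by ring. ring.
    - intros _ _. unfold f. apply (lim_mult (at_right tb)).
      + apply (cont_right (fun s => exp (K * (s - tb)))). apply (ex_derive_continuous (K:=R_AbsRing) (V:=R_NormedModule)).
        auto_derive; auto.
      + apply (lim_plus (at_right tb)); [|apply filterlim_const].
        apply (lim_plus (at_right tb)); [apply Hr; auto; lra|].
        apply (lim_opp (at_right tb)). apply Hr; auto; lra.
    - intros _ s0 _ Hs0 _.
      assert (E1 : Du N u c i s0 <= K * (M0 - u i s0)).
      { apply Hup; auto. intros; apply IU; auto; lra. apply IU; auto; lra. }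
      assert (E2 : K * (m0 - u j s0) <= Du N u c j s0).
      { apply Hlow; auto. intros; apply IL; auto; lra. apply IL; auto; lra. }
      assert (E3 : K * (M0 - m0) <= K * Dv) by (apply Rmult_le_compat_l; auto).
      pose proof (exp_pos (K * (s0 - tb))). nra.
    - intros; lra.
    - lia. }
  specialize (Hf s ltac:(lra)). unfold f in Hf.
  replace (tb - tb) with 0 in Hf by ring. rewrite Rmult_0_r, exp_0, Rmult_1_l in Hf.
  assert (Hx : exp (- K * (s - tb)) * exp (K * (s - tb)) = 1).
  { rewrite <- exp_plus. replace (- K * (s - tb) + K * (s - tb)) with 0 by ring. apply exp_0. }
  pose proof (exp_pos (- K * (s - tb))) as Hp.
  apply Rmult_le_compat_l with (r := exp (- K * (s - tb))) in Hf; [|lra].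
  rewrite <- Rmult_assoc, Hx, Rmult_1_l in Hf. nra.
Qed.

Lemma sup_norm_spec (psi : R -> R) :
  (exists B, forall r, Rabs (psi r) <= B) ->
  (forall r, psi r <= sup_norm psi) /\ 0 <= sup_norm psi.
Proof.
  intros [B HB]. unfold sup_norm.
  set (E := fun y => exists r, y = Rabs (psi r)).
  destruct (Lub_Rbar_correct E) as [Hub Hlub].
  assert (Hfin : Rbar_le (Lub_Rbar E) B).
  { apply Hlub. intros y [r ->]. simpl. auto. }
  assert (Hge : forall r, Rbar_le (Rabs (psi r)) (Lub_Rbar E)).
  { intros r. apply Hub. exists r; auto. }
  destruct (Lub_Rbar E) as [l| |]; simpl in *.
  - split. intros r. specialize (Hge r). pose proof (Rle_abs (psi r)). lra.
    specialize (Hge 0). pose proof (Rabs_pos (psi 0)). lra.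
  - contradiction.
  - specialize (Hge 0). contradiction.
Qed.

Theorem proposition7p9
  (N d : nat) (psi : R -> R) (t : nat -> R) (alpha : R -> R)
  (x v : nat -> nat -> R -> R) :
  (2 <= N)%nat ->
  (* psi positive, bounded, continuous *)
  (forall r, 0 < psi r) ->
  (exists B, forall r, Rabs (psi r) <= B) ->
  (forall r, continuous psi r) ->
  (* int_0^oo min_{[0,x]} psi dx = +oo *)
  is_lim (fun X => RInt (min_on psi) 0 X) p_infty p_infty ->
  (* switching times *)
  t 0%nat = 0 ->
  (forall n, t n < t (S n)) ->
  (forall n, 0 <= t n) ->
  is_lim_seq t p_infty ->
  (forall n, t (2 * n + 2)%nat - t (2 * n + 1)%nat < ln 2 / sup_norm psi) ->
  (forall n, t (2 * n + 1)%nat - t (2 * n)%nat > 1 / sup_norm psi) ->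
  ex_series (fun p =>
    ln (exp (sup_norm psi * (t (2 * p + 2)%nat - t (2 * p + 1)%nat))
        / (2 - exp (sup_norm psi * (t (2 * p + 2)%nat - t (2 * p + 1)%nat))))) ->
  (* alpha *)
  alpha 0 = 1 ->
  (forall n s, t (2 * n)%nat < s < t (2 * n + 1)%nat -> alpha s = 1) ->
  (forall n s, t (2 * n + 1)%nat <= s <= t (2 * n + 2)%nat -> alpha s = -1) ->
  (* the solution: continuous on [0, oo) *)
  (forall i k s, 0 < s -> continuous (x i k) s /\ continuous (v i k) s) ->
  (forall i k, filterlim (x i k) (at_right 0) (locally (x i k 0)) /\
               filterlim (v i k) (at_right 0) (locally (v i k 0))) ->
  (* Cucker-Smale system on each (t_n, t_{n+1}) *)
  (forall n s, t n < s < t (S n) -> forall i k, (i < N)%nat -> (k < d)%nat ->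
     is_derive (x i k) s (v i k s) /\
     is_derive (v i k) s
       (/ (INR N - 1) *
        sumR N (fun j => if Nat.eq_dec j i then 0 else
          alpha s * psi (enorm d (fun l => x i l s - x j l s))
            * (v j k s - v i k s)))) ->
  forall i j, (i < N)%nat -> (j < N)%nat ->
  forall e : nat -> R, enorm d e = 1 ->
  forall n tb s, t (2 * n)%nat <= tb -> tb <= s -> s < t (2 * n + 1)%nat ->
    dot d (fun k => v i k s - v j k s) e
    <= exp (- sup_norm psi * (s - tb)) * dot d (fun k => v i k tb - v j k tb) e
       + (1 - exp (- sup_norm psi * (s - tb))) * dV N d v (t (2 * n)%nat).
Proof.
  intros HN Hpos HB Hpc Hint Ht0 Hinc Hnn Hlim Hs1 Hs2 Hser Ha0 Ha1 Ham Hcont Hcont0 Hsys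
    i j Hi Hj e He n tb s Htb1 Htb2 Hsb.
  destruct (sup_norm_spec psi HB) as [HK1 HK0].
  set (K := sup_norm psi) in *.
  set (u := fun k s => sumR d (fun l => e l * v k l s)).
  set (c := fun k j s => if Nat.eq_dec j k then 0 else psi (enorm d (fun l => x k l s - x j l s))).
  set (a := t (2 * n)%nat) in *. set (b := t (2 * n + 1)%nat) in *.
  assert (Hdot : forall p q s, dot d (fun k => v p k s - v q k s) e = u p s - u q s).
  { intros p q s0. unfold dot, u. rewrite <- sumR_minus. apply sumR_ext. intros; ring. }
  rewrite !Hdot.
  apply (core N K u c a b); auto.
  - intros k s0 Hk Hs0.
    assert (Hs0' : t (2 * n)%nat < s0 < t (S (2 * n))).
    { replace (S (2 * n)) with (2 * n + 1)%nat by lia. exact Hs0. }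
    assert (Hal : alpha s0 = 1) by (apply (Ha1 n); exact Hs0).
    eapply is_derive_eq.
    + apply (derive_sumR d (fun l s => e l * v k l s)
        (fun l s => e l * (/ (INR N - 1) *
          sumR N (fun j => if Nat.eq_dec j k then 0 else
            alpha s * psi (enorm d (fun l0 => x k l0 s - x j l0 s)) * (v j l s - v k l s))))).
      intros l Hl. apply is_derive_scal. apply (Hsys _ s0 Hs0' k l Hk Hl).
    + unfold Du.
      rewrite (sumR_ext d _ (fun l => / (INR N - 1) *
         sumR N (fun j0 => c k j0 s0 * (e l * v j0 l s0 - e l * v k l s0)))).
      2:{ intros l Hl. rewrite (sumR_ext N (fun j0 => c k j0 s0 * _)
            (fun j0 => e l * (if Nat.eq_dec j0 k then 0 else
              alpha s0 * psi (enorm d (fun l0 => x k l0 s0 - x j0 l0 s0)) * (v j0 l s0 - v k l s0)))).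
          rewrite sumR_scal. ring.
          intros j0 Hj0. unfold c. rewrite Hal. destruct (Nat.eq_dec j0 k); ring. }
      rewrite sumR_scal, sumR_swap. f_equal. apply sumR_ext. intros j0 Hj0.
      unfold u. rewrite sumR_scal, sumR_minus. reflexivity.
  - intros k j0 s0. unfold c. destruct (Nat.eq_dec j0 k). lra.
    split; [left; apply Hpos| apply HK1].
  - intros k s0. unfold c. destruct (Nat.eq_dec k k); [reflexivity|congruence].
  - intros k tb0 Hk Htb0. unfold u.
    apply (lim_sumR (at_right tb0) d (fun l s => e l * v k l s) (fun l => e l * v k l tb0)).
    intros l Hl. apply (lim_mult (at_right tb0)). apply filterlim_const.
    assert (0 <= tb0) by (pose proof (Hnn (2 * n)%nat); unfold a in *; lra).
    destruct (Rle_lt_or_eq_dec 0 tb0 H) as [Hp|E].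
    + apply cont_right. apply (Hcont k l tb0 Hp).
    + subst tb0. apply (Hcont0 k l).
  - intros p q Hp Hq. rewrite <- Hdot.
    eapply Rle_trans. apply dot_le_enorm; auto.
    unfold dV. eapply Rle_trans; [| apply (maxR_ge N _ p Hp)]. simpl.
    apply (maxR_ge N (fun j0 => enorm d (fun k => v p k a - v j0 k a)) q Hq).
Qed.
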